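(* Let $\mathcal A=(\Sigma,Q_\mathcal A,I_\mathcal A,F_\mathcal A,\delta_\mathcal A)$ and $\mathcal B=(\Sigma,Q_\mathcal B,I_\mathcal B,F_\mathcal B,\delta_\mathcal B)$ be NBA, and let $\sqsubseteq$ be either backward direct simulation or backward direct trace inclusion, computed on the disjoint union of $\mathcal A$ and $\mathcal B$. If for every $p\in F_\mathcal A$ there exists $q\in F_\mathcal B$ with $p\sqsubseteq q$, then $\mathcal L(\mathcal A)\subseteq\mathcal L(\mathcal B)$.
   Context: An NBA is $(\Sigma,Q,I,F,\delta)$ with $\delta\subseteq Q\times\Sigma\times Q$, assumed forward and backward complete (every state has, for every symbol, at least one incoming and one outgoing transition with that symbol). Traces $q_0\xrightarrow{\sigma_0}q_1\cdots$ are initial if $q_0\in I$; infinite traces are fair if they visit $F$ infinitely often; $\mathcal L$ is the set of infinite words with an initial fair trace. Backward direct simulation $\sqsubseteq^{\mathrm{bw\text{-}di}}$: in a game from configuration $(p_0,q_0)$, at round $i$ from $(p_i,q_i)$ Spoiler picks a transition $p_{i+1}\xrightarrow{\sigma_i}p_i$, Duplicator answers with $q_{i+1}\xrightarrow{\sigma_i}q_i$; Duplicator wins the infinite play if for all $i$, $p_i\in F\Rightarrow q_i\in F$ and $p_i\in I\Rightarrow q_i\in I$; $p\sqsubseteq^{\mathrm{bw\text{-}di}}q$ iff Duplicator has a winning strategy from $(p,q)$. Backward direct trace inclusion: $p\subseteq^{\mathrm{bw\text{-}di}}q$ iff for every finite word $\sigma_0\cdots\sigma_{m-1}$ and every initial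 finite trace $p_0\xrightarrow{\sigma_0}\cdots\xrightarrow{\sigma_{m-1}}p_m=p$ there is an initial finite trace $q_0\xrightarrow{\sigma_0}\cdots\xrightarrow{\sigma_{m-1}}q_m=q$ with $p_i\in F\Rightarrow q_i\in F$ for all $0\le i\le m$. *)

(* Defs.v *)
From mathcomp Require Import all_boot.
Set Implicit Arguments. Unset Strict Implicit. Unset Printing Implicit Defensive.

Record nba (S : finType) := NBA {
  state : finType;
  init  : pred state;
  final : pred state;
  trans : state -> S -> state -> bool;
  fwd_complete : forall (p : state) (a : S), exists q, trans p a q;
  bwd_complete : forall (q : state) (a : S), exists p, trans p a q
}.

Section Generic.
Variables (S : finType) (Q : Type) (I F : pred Q) (d : Q -> S -> Q -> bool).

Definition is_trace (w : nat -> S) (r : nat -> Q) : Prop :=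
  forall i, d (r i) (w i) (r i.+1).
Definition fair (r : nat -> Q) : Prop :=
  forall n, exists m, n <= m /\ F (r m).
Definition accepts (w : nat -> S) : Prop :=
  exists r : nat -> Q, I (r 0) /\ is_trace w r /\ fair r.

(* A Duplicator strategy maps the history of Spoiler's choices
   [:: (ps 1, ws 0); ...; (ps (i+1), ws i)] to Duplicator's state q_(i+1). *)
Definition strategy := seq (Q * S) -> Q.

Definition spoiler_play (p0 : Q) (ps : nat -> Q) (ws : nat -> S) : Prop :=
  ps 0 = p0 /\ forall i, d (ps i.+1) (ws i) (ps i).

Definition history (ps : nat -> Q) (ws : nat -> S) (i : nat) : seq (Q * S) :=
  [seq (ps j.+1, ws j) | j <- iota 0 i.+1].

Definition dup_play (q0 : Q) (st : strategy) (ps : nat -> Q) (ws : nat -> S)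
  (i : nat) : Q :=
  match i with 0 => q0 | i'.+1 => st (history ps ws i') end.

Definition dup_wins (p0 q0 : Q) (st : strategy) : Prop :=
  forall ps ws, spoiler_play p0 ps ws ->
    let qs := dup_play q0 st ps ws in
    (forall i, d (qs i.+1) (ws i) (qs i)) /\
    (forall i, (F (ps i) -> F (qs i)) /\ (I (ps i) -> I (qs i))).

Definition bw_di_sim (p q : Q) : Prop := exists st : strategy, dup_wins p q st.

Definition bw_di_trinc (p q : Q) : Prop :=
  forall (m : nat) (w : nat -> S) (ps : nat -> Q),
    I (ps 0) -> (forall i, i < m -> d (ps i) (w i) (ps i.+1)) -> ps m = p ->
    exists qs : nat -> Q,
      [/\ I (qs 0), (forall i, i < m -> d (qs i) (w i) (qs i.+1)), qs m = q &
          forall i, i <= m -> F (ps i) -> F (qs i)].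
End Generic.

Definition lang (S : finType) (A : nba S) (w : nat -> S) : Prop :=
  accepts (@init S A) (@final S A) (@trans S A) w.

Section Union.
Variables (S : finType) (A B : nba S).
Definition U_state : finType := (state A + state B)%type.
Definition U_init (x : U_state) : bool :=
  match x with inl p => init p | inr q => init q end.
Definition U_final (x : U_state) : bool :=
  match x with inl p => final p | inr q => final q end.
Definition U_trans (x : U_state) (a : S) (y : U_state) : bool :=
  match x, y with
  | inl p, inl p' => trans p a p'
  | inr q, inr q' => trans q a q'
  | _, _ => false
  end.
End Union.

(* Main.v *)
Require Import Defs.
From mathcomp Require Import all_boot zify.
From Stdlib Require Import Classical ClassicalEpsilon.
Set Implicit Arguments. Unset Strict Implicit.
From Stdlib Require Import Classical ClassicalEpsilon.
Set Implicit Arguments. Unset Strict Implicit.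

Definition validB (S Q : Type) (I FB : pred Q) (d : Q -> S -> Q -> bool)
  (w : nat -> S) (Fr : nat -> bool) (m : nat) (t : nat -> Q) : Prop :=
  [/\ I (t 0), (forall i, i < m -> d (t i) (w i) (t i.+1)) &
      (forall i, i <= m -> Fr i -> FB (t i))].

Definition updf (Q : Type) (p : nat -> Q) (n : nat) (y : Q) : nat -> Q :=
  fun i => if i == n then y else p i.

Lemma konig (S Q : finType) (I FB : pred Q) (d : Q -> S -> Q -> bool)
  (w : nat -> S) (Fr : nat -> bool) :
  (forall n, exists m, n <= m /\ Fr m) ->
  (forall m, Fr m -> exists t : nat -> Q, validB I FB d w Fr m t) ->
  exists rB : nat -> Q, I (rB 0) /\ (forall i, d (rB i) (w i) (rB i.+1)) /\
    (forall n, exists m, n <= m /\ FB (rB m)).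
Proof.
move=> Hfair Hval.
pose G n (p : nat -> Q) := forall N, exists m t, [/\ N <= m, n <= m,
  validB I FB d w Fr m t & forall i, i < n -> t i = p i].
have H0 : forall p, G 0 p.
  move=> p N; have [m [Nm Fm]] := Hfair N; have [t vt] := Hval m Fm.
  by exists m, t; split.
have [q0 _] : exists q0 : Q, True.
  have [m [_ Fm]] := Hfair 0; have [t _] := Hval m Fm; by exists (t 0).
have step : forall n p, G n p -> exists y, G n.+1 (updf p n y).
  move=> n p Gp; apply: NNPP => Hn.
  have Hy : forall y, exists N, forall m t, N <= m -> n.+1 <= m ->
      validB I FB d w Fr m t -> (forall i, i < n.+1 -> t i = updf p n y i) -> False.
    move=> y; apply: NNPP => Hc; apply: Hn; exists y => N.
    apply: NNPP => Hc2; apply: Hc; exists N => m t h1 h2 h3 h4.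
    by apply: Hc2; exists m, t; split.
  pose fN y := proj1_sig (constructive_indefinite_description _ (Hy y)).
  have fNP y := proj2_sig (constructive_indefinite_description _ (Hy y)).
  have [m [t [h1 h2 h3 h4]]] := Gp (n.+1 + \max_(y : Q) fN y).
  apply: (fNP (t n) m t) => //.
  - apply: leq_trans (leq_bigmax (F:=fN) (t n)) _; lia.
  - lia.
  - move=> i; rewrite ltnS leq_eqVlt /updf => /orP [/eqP ->|lt]; first by rewrite eqxx.
    by rewrite (ltn_eqF lt) h4.
have gstep : forall n p, exists y, G n p -> G n.+1 (updf p n y).
  move=> n p; case: (classic (G n p)) => Hg.
    by have [y Hy] := step n p Hg; exists y.
  by exists q0.
pose sel n p := proj1_sig (constructive_indefinite_description _ (gstep n p)).
have selP n p : G n p -> G n.+1 (updf p n (sel n p)).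
  exact: (proj2_sig (constructive_indefinite_description _ (gstep n p))).
pose pf := fix pf (n : nat) : nat -> Q :=
  match n with 0 => fun _ => q0 | n'.+1 => updf (pf n') n' (sel n' (pf n')) end.
have Ginv : forall n, G n (pf n).
  by elim=> [|n IH]; [exact: H0 | exact: selP].
have agree : forall n i, i < n -> pf n i = pf i.+1 i.
  elim=> [|n IH] i //; rewrite ltnS leq_eqVlt => /orP [/eqP ->|lt] //.
  by rewrite /= /updf (ltn_eqF lt) IH.
exists (fun i => pf i.+1 i); split; last split.
- have [m [t [_ _ [It _ _] ag]]] := Ginv 1 0.
  by rewrite -ag.
- move=> i; have [m [t [_ h2 [_ Tt _] ag]]] := Ginv i.+2 0.
  rewrite -(agree i.+2 i) // -ag // -ag //; apply: Tt; lia.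
- move=> n; have [m [nm Fm]] := Hfair n.
  have [m' [t [_ h2 [_ _ Ft] ag]]] := Ginv m.+1 0.
  exists m; split => //; rewrite -ag //; apply: Ft => //; lia.
Qed.
Unset Implicit Arguments.
Definition getB {S : finType} {A B : nba S} (q : state B) (x : U_state A B) : state B :=
  match x with inr b => b | inl _ => q end.

Lemma Utrans_inr {S : finType} {A B : nba S} (x : U_state A B) a b :
  U_trans x a (inr b) -> exists b', x = inr b'.
Proof. by case: x => // b' _; exists b'. Qed.

Lemma Utrans_inr' {S : finType} {A B : nba S} (x : U_state A B) a b :
  U_trans (inr b) a x -> exists b', x = inr b'.
Proof. by case: x => // b' _; exists b'. Qed.

Theorem theorem4p2 (S : finType) (A B : nba S) :
  ((forall p : state A, final p ->
      exists q : state B, final q /\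
        bw_di_sim (@U_init S A B) (@U_final S A B) (@U_trans S A B) (inl p) (inr q))
   \/
   (forall p : state A, final p ->
      exists q : state B, final q /\
        bw_di_trinc (@U_init S A B) (@U_final S A B) (@U_trans S A B) (inl p) (inr q))) ->
  forall w : nat -> S, lang A w -> lang B w.
Proof.
move=> H w [r [Ir [Tr Fr]]].
have Hval : forall m, final (r m) -> exists t : nat -> state B,
    validB (@init S B) (@final S B) (@trans S B) w (fun i => final (r i)) m t.
  move=> m Fm; case: H => H.
  -
    have [q [_ [st Hst]]] := H _ Fm.
    pose pr (x : state A) (a : S) := xchoose (bwd_complete x a).
    have prP x a : trans (pr x a) a x by exact: (xchooseP (bwd_complete x a)).
    pose ext := fix ext (k : nat) : state A :=
      match k with 0 => r 0 | k'.+1 => pr (ext k') (w 0) end.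
    pose pa i := if i <= m then r (m - i) else ext (i - m).
    pose ps i : U_state A B := inl (pa i).
    pose ws i := if i < m then w (m - i.+1) else w 0.
    have SP : spoiler_play (@U_trans S A B) (inl (r m)) ps ws.
      split; first by rewrite /ps /pa leq0n subn0.
      move=> i; rewrite /ps /pa /ws /=.
      case: (ltngtP i m) => him.
      +         have -> : m - i = (m - i.+1).+1 by lia.
        exact: Tr.
      + have -> : i.+1 - m = (i - m).+1 by lia.
        exact: prP.
      + rewrite him subnn.
        have -> : m.+1 - m = 1 by lia.
        exact: prP.
    have [Tq FIq] := Hst ps ws SP.
    set qs := dup_play _ _ _ _ in Tq FIq.
    have isr : forall i, exists b, qs i = inr b.
      elim=> [|i [b IH]]; first by exists q.
      by move: (Tq i); rewrite IH => /Utrans_inr.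
    exists (fun j => getB q (qs (m - j))); split.
    + have [b Hb] := isr (m - 0); rewrite Hb /=.
      have := (FIq m).2; rewrite subn0 in Hb; rewrite Hb /ps /pa leqnn subnn; exact.
    + move=> i im.
      have [b Hb] := isr (m - i); have [b' Hb'] := isr (m - i.+1).
      rewrite Hb Hb' /=.
      have := Tq (m - i.+1).
      have -> : (m - i.+1).+1 = m - i by lia.
      rewrite Hb Hb' /ws.
      have -> : m - i.+1 < m by lia.
      by have -> : m - (m - i.+1).+1 = i by lia.
    + move=> i im Fi.
      have [b Hb] := isr (m - i); rewrite Hb /=.
      have := (FIq (m - i)).1; rewrite Hb /ps /pa leq_subr.
      have -> : m - (m - i) = i by lia.
      exact.
  -
    have [q [_ Htr]] := H _ Fm.
    have [qs [Iq Tq Eq Fq]] := Htr m w (fun i => inl (r i)) Ir (fun i _ => Tr i) erefl.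
    have isr : forall k i, i + k = m -> exists b, qs i = inr b.
      elim=> [|k IH] i hik; first by exists q; rewrite -Eq -hik addn0.
      have [b Hb] := IH i.+1 ltac:(by rewrite addSnnS).
      by have := Tq i ltac:(lia); rewrite Hb => /Utrans_inr.
    have isr' : forall i, i <= m -> exists b, qs i = inr b.
      by move=> i im; apply: (isr (m - i)); lia.
    exists (fun i => getB q (qs i)); split.
    + have [b Hb] := isr' 0 (leq0n _); by move: Iq; rewrite Hb.
    + move=> i im; have [b Hb] := isr' i (ltnW im); have [b' Hb'] := isr' i.+1 im.
      by move: (Tq i im); rewrite Hb Hb'.
    + move=> i im Fi; have [b Hb] := isr' i im.
      by move: (Fq i im Fi); rewrite Hb.
have [rB [IB [TB FB]]] := konig Fr Hval.
by exists rB.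
Qed.
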